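(* Let $\lambda$ be a partition and $a,b,c,d\in\mathbb F$. Then: (i) $\langle v_\lambda,\Xi_{aa}v_\lambda\rangle=\sum_{x\in C_\lambda}\mathrm{sgn}(x)\,\delta_{a,x}$; (ii) $\langle v_\lambda,\Xi_{abcd}v_\lambda\rangle\neq0$ only if ($a=b$ and $c=d$) or ($a=d$ and $b=c$); (iii) if $a\ne b$, then $\langle v_\lambda,\Xi_{abba}v_\lambda\rangle=-\sum_{x,x'\in C_\lambda}\mathrm{sgn}(x\,x')\,\delta_{a,x}\,\delta_{b,x'}$.
   Context: $\mathbb F=\mathbb Z+\frac12$. $\mathsf F$ has orthonormal basis $v_S$ for strictly decreasing sequences $S=(s_i)_{i\ge1}\subset\mathbb F$ with $s_{i+1}=s_i-1$ for large $i$ (think $v_S=\underline{s_1}\wedge\underline{s_2}\wedge\cdots$). For $k\in\mathbb F$: $\psi_kv_S=0$ if $k\in S$, else $\psi_kv_S=(-1)^{\#\{i:s_i>k\}}v_{S\cup\{k\}}$; $\psi^*_kv_S=(-1)^{i-1}v_{S\setminus\{s_i\}}$ if $k=s_i$, else $0$. For $a>0$, $\psi_a,\psi^*_{-a}$ are creation and $\psi_{-a},\psi^*_a$ annihilation operators; $:\phi_1\cdots\phi_k:=\mathrm{sgn}(\sigma)\phi_{\sigma(1)}\cdots\phi_{\sigma(k)}$ for any permutation $\sigma$ moving creation operators to the left of annihilation operators. $\Xi_{ab}=:\psi_a\psi^*_b:$, $\Xi_{abcd}=:\psi_a\psi^*_b\psi_c\psi^*_d:$. For a partition $\lambda$, $v_\lambda=v_{S_\lambda}$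 with $S_\lambda=(\lambda_j-j+\frac12)_{j\ge1}$. Modified Frobenius coordinates: if $d$ is the number of $i$ with $\lambda_i\ge i$, put $c_i=\lambda_i-i+\frac12$, $c_i^*=-(\lambda'_i-i)-\frac12$ ($i=1,\dots,d$, $\lambda'$ the transpose partition), and $C_\lambda=\{c_1,\dots,c_d,c^*_1,\dots,c^*_d\}$. *)

(* Defs.v *)
From HB Require Import structures.
From mathcomp Require Import all_boot all_order all_algebra.
From mathcomp Require Import finmap.
Set Implicit Arguments. Unset Strict Implicit. Unset Printing Implicit Defensive.
Import Order.TTheory GRing.Theory Num.Theory.
Local Open Scope ring_scope.

(* Half-integers.  An element of F = Z + 1/2 is encoded by the integer n,   *)
(* standing for n + 1/2.  Hence  n + 1/2 > 0  <->  0 <= n.                  *)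
Definition halfpos (n : int) : bool := (0 <= n).

Definition sgnF (n : int) : int := if halfpos n then 1 else -1.

(* Basis of the semi-infinite wedge space.  An index set S (strictly        *)
(* decreasing sequence, eventually decreasing by steps of 1) is the same as *)
(* a subset of F that is bounded above and contains all sufficiently small  *)
(* elements.  Such S is encoded (bijectively) by the FINITE set             *)
(*     D = S (symmetric difference) {-1/2, -3/2, ...}                       *)
(* of (encoded) half-integers.                                              *)
Definition state := {fset int}.

Definition memS (D : state) (k : int) : bool := (k < 0) (+) (k \in D).

Definition toggle (D : state) (k : int) : state :=
  if k \in D then (D `\ k)%fset else (k |` D)%fset.

(* #{ s in S : s > k }.  All such s lie in the window k+1, ..., k+N. *)
Definition cntAbove (D : state) (k : int) : nat :=
  let N := maxn (\max_(d <- D) `|d - k|%N) `|k|%N in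
  count (memS D) [seq k + 1 + (i%:Z) | i <- iota 0 N].

Inductive op := Psi of int | PsiS of int.

(* Action on a signed basis vector  c * v_S  (None encodes the zero vector). *)
Definition act (o : op) (x : option (int * state)) : option (int * state) :=
  match x with
  | None => None
  | Some (c, D) =>
    match o with
    | Psi k => if memS D k then None
               else Some (c * (-1) ^+ cntAbove D k, toggle D k)
    | PsiS k => if memS D k then Some (c * (-1) ^+ cntAbove D k, toggle D k)
                else None
    end
  end.

(* phi_1 phi_2 ... phi_m v_S  (phi_m acts first) *)
Definition apply_word (w : seq op) (D : state) : option (int * state) :=
  foldr act (Some (1, D)) w.

Definition diag_elem (w : seq op) (D : state) : int :=
  match apply_word w D with
  | Some (c, D') => if D' == D then c else 0
  | None => 0
  end.

Definition is_creation (o : op) : bool :=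
  match o with Psi k => halfpos k | PsiS k => ~~ halfpos k end.

(* Normal ordering: the stable reordering moving creation operators to the *)
(* left, with the sign of that permutation ((-1)^(number of pairs i<j with *)
(* phi_i annihilation and phi_j creation)).                                 *)
Fixpoint ninv (w : seq op) : nat :=
  match w with
  | [::] => 0
  | o :: w' => (if is_creation o then 0 else count is_creation w') + ninv w'
  end.

Definition normal_word (w : seq op) : seq op :=
  filter is_creation w ++ filter (predC is_creation) w.

Definition normal_diag (w : seq op) (D : state) : int :=
  (-1) ^+ ninv w * diag_elem (normal_word w) D.

Definition Xi2 (a b : int) : seq op := [:: Psi a; PsiS b].
Definition Xi4 (a b c d : int) : seq op := [:: Psi a; PsiS b; Psi c; PsiS d].

(* Partitions: weakly decreasing sequences of naturals (trailing zeros are  *)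
(* harmless); lambda_j = nth 0 l (j-1), which is 0 for j > size l.         *)
Definition is_partition (l : seq nat) : bool := sorted geq l.

Definition part (l : seq nat) (j : nat) : nat := nth 0%N l j.-1.

(* membership of (n + 1/2) in S_lambda = (lambda_j - j + 1/2)_{j>=1}:      *)
(* either j <= size l, or j > size l where lambda_j - j = -j.             *)
Definition memSlam (l : seq nat) (n : int) : bool :=
  has (fun j : nat => (part l j)%:Z - j%:Z == n) (iota 1 (size l))
  || ((n < 0) && ((size l)%:Z < - n)).

(* the finite encoding D of S_lambda (differences with the vacuum occur  *)
(* only in the window [-size l, sumn l]).                                  *)
Definition Slam (l : seq nat) : state :=
  [fset n in [seq (i%:Z - (size l)%:Z) | i <- iota 0 (size l + sumn l + 1)]
     | memSlam l n != (n < 0)]%fset.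

Definition partT (l : seq nat) (i : nat) : nat := count (fun x => i <= x)%N l.

Definition durfee (l : seq nat) : nat :=
  count (fun i => i <= part l i)%N (iota 1 (size l)).

(* modified Frobenius coordinates (encoded half-integers):               *)
(* c_i = lambda_i - i + 1/2  ~>  lambda_i - i,                           *)
(* c*_i = -(lambda'_i - i) - 1/2  ~>  i - lambda'_i - 1.                  *)
Definition Clam (l : seq nat) : {fset int} :=
  ([fset (part l i)%:Z - i%:Z | i in iota 1 (durfee l)]
   `|` [fset i%:Z - (partT l i)%:Z - 1 | i in iota 1 (durfee l)])%fset.

(* Main.v *)
Require Import Defs.
From HB Require Import structures.
From mathcomp Require Import all_boot all_order all_algebra.
From mathcomp Require Import finmap zify.
Import Order.TTheory GRing.Theory Num.Theory.
Set Implicit Arguments. Unset Strict Implicit. Unset Printing Implicit Defensive.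
Local Open Scope ring_scope.

Lemma memS_toggle D k x : memS (toggle D k) x = memS D x (+) (x == k).
Proof.
rewrite /memS /toggle; case: ifP => kD; rewrite !inE;
case: (x =P k) => [->|nxk] //=; rewrite ?kD ?addbT ?addbF ?negbK //.
Qed.

Lemma toggleK D k : toggle (toggle D k) k = D.
Proof.
rewrite /toggle; case kD: (k \in D); rewrite !inE ?eqxx ?kD /=;
apply/fsetP => x; rewrite !inE; case: (x =P k) => [->|] //=; by rewrite kD.
Qed.

Definition NN (D : state) (k : int) : nat := maxn (\max_(d <- D) `|d - k|%N) `|k|%N.
Definition win (k : int) (M : nat) := [seq k + 1 + (i%:Z) | i <- iota 0 M].

Lemma cnt_win D k M : (NN D k <= M)%N -> cntAbove D k = count (memS D) (win k M).
Proof.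
move=> HM; rewrite /cntAbove -/(NN D k) /win.
set N := NN D k in HM *.
rewrite -(subnKC HM) iotaD map_cat count_cat add0n.
suff -> : count (memS D) [seq k + 1 + (i%:Z) | i <- iota N (M - N)] = 0%N by rewrite addn0.
apply/eqP; rewrite -leqn0 leqNgt -has_count; apply/hasPn => x /mapP [i Hi ->].
rewrite mem_iota in Hi.
have HN1 : (`|k|%N <= N)%N by rewrite /N /NN leq_maxr.
have h1 : (k + 1 + i%:Z < 0) = false by apply/negbTE; lia.
have h2 : (k + 1 + i%:Z \in D) = false.
  apply/negbTE/negP => xD.
  have := @leq_bigmax_seq _ (enum_fset D) xpredT (fun d : int => `|d - k|%N) _ xD (erefl true).
  have : (\max_(d <- D) `|d - k|%N <= N)%N by rewrite /N /NN leq_maxl.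
  move=> H1 H2; have := leq_trans H2 H1. lia.
by rewrite /memS h1 h2.
Qed.

Lemma cnt_eq D D' k : (forall x, k < x -> memS D x = memS D' x) ->
  cntAbove D k = cntAbove D' k.
Proof.
move=> H.
rewrite (@cnt_win D k (maxn (NN D k) (NN D' k))) ?leq_maxl //.
rewrite (@cnt_win D' k (maxn (NN D k) (NN D' k))) ?leq_maxr //.
apply: eq_in_count => x /mapP [i _ ->]; apply: H; lia.
Qed.

Lemma cnt_toggle D k : cntAbove (toggle D k) k = cntAbove D k.
Proof.
apply: cnt_eq => x Hx; rewrite memS_toggle.
have -> : (x == k) = false by apply/negbTE; lia.
by rewrite addbF.
Qed.

Lemma sign2 (n : nat) (c : int) : c * (-1) ^+ n * (-1) ^+ n = c.
Proof. by rewrite -mulrA -exprD addnn -mul2n exprM expr2 mulrNN mulr1 expr1n mulr1. Qed.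

Lemma pairSP c D k : act (Psi k) (act (PsiS k) (Some (c, D))) =
  if memS D k then Some (c, D) else None.
Proof.
rewrite /=; case: ifP => h //=.
by rewrite memS_toggle h eqxx /= toggleK cnt_toggle sign2.
Qed.

Lemma pairPS c D k : act (PsiS k) (act (Psi k) (Some (c, D))) =
  if memS D k then None else Some (c, D).
Proof.
rewrite /=; case: ifP => h //=.
by rewrite memS_toggle h eqxx /= toggleK cnt_toggle sign2.
Qed.

Definition idx (o : op) := match o with Psi k => k | PsiS k => k end.

Lemma act_state o c D c' D' : act o (Some (c, D)) = Some (c', D') -> D' = toggle D (idx o).
Proof. by case: o => k /=; case: ifP => _ // [_ <-]. Qed.

Lemma nestSP o1 o4 y D : idx o4 != y ->
  act o1 (act (Psi y) (act (PsiS y) (act o4 (Some (1, D))))) =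
  if memS D y then act o1 (act o4 (Some (1, D))) else None.
Proof.
move=> ne; case E: (act o4 _) => [[c D1]|]; last by case: ifP.
rewrite pairSP (act_state E) memS_toggle.
have -> : (y == idx o4) = false by apply/negbTE; rewrite eq_sym.
by rewrite addbF; case: ifP.
Qed.

Lemma nestPS o1 o4 y D : idx o4 != y ->
  act o1 (act (PsiS y) (act (Psi y) (act o4 (Some (1, D))))) =
  if memS D y then None else act o1 (act o4 (Some (1, D))).
Proof.
move=> ne; case E: (act o4 _) => [[c D1]|]; last by case: ifP.
rewrite pairPS (act_state E) memS_toggle.
have -> : (y == idx o4) = false by apply/negbTE; rewrite eq_sym.
by rewrite addbF; case: ifP.
Qed.

Definition fval (D : state) (a : int) : int :=
  if halfpos a then (memS D a)%:R else - (~~ memS D a)%:R.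

Lemma diagSP D k : diag_elem [:: Psi k; PsiS k] D = (memS D k)%:R.
Proof. by rewrite /diag_elem /apply_word /= -/(act (Psi k) _) pairSP; case: ifP; rewrite ?eqxx. Qed.

Lemma diagPS D k : diag_elem [:: PsiS k; Psi k] D = (~~ memS D k)%:R.
Proof. by rewrite /diag_elem /apply_word /= -/(act (PsiS k) _) pairPS; case: ifP; rewrite ?eqxx. Qed.

Lemma part1 D a : normal_diag (Xi2 a a) D = fval D a.
Proof.
rewrite /normal_diag /Xi2 /normal_word /fval /=.
case: (halfpos a) => /=.
  by rewrite diagSP expr0 mul1r.
by rewrite diagPS expr1 mulN1r.
Qed.

From mathcomp Require Import ring.

Lemma diag_nestSP D o1 o4 y : idx o4 != y ->
  diag_elem [:: o1; Psi y; PsiS y; o4] D = (memS D y)%:R * diag_elem [:: o1; o4] D.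
Proof.
move=> ne; rewrite /diag_elem.
have -> : apply_word [:: o1; Psi y; PsiS y; o4] D =
  act o1 (act (Psi y) (act (PsiS y) (act o4 (Some (1, D))))) by [].
have -> : apply_word [:: o1; o4] D = act o1 (act o4 (Some (1, D))) by [].
rewrite nestSP //; case: ifP => _; rewrite ?mul1r ?mul0r //.
Qed.

Lemma diag_nestPS D o1 o4 y : idx o4 != y ->
  diag_elem [:: o1; PsiS y; Psi y; o4] D = (~~ memS D y)%:R * diag_elem [:: o1; o4] D.
Proof.
move=> ne; rewrite /diag_elem.
have -> : apply_word [:: o1; PsiS y; Psi y; o4] D =
  act o1 (act (PsiS y) (act (Psi y) (act o4 (Some (1, D))))) by [].
have -> : apply_word [:: o1; o4] D = act o1 (act o4 (Some (1, D))) by [].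
rewrite nestPS //; case: ifP => _; rewrite ?mul1r ?mul0r //.
Qed.

Lemma part3 D a b : a != b -> normal_diag (Xi4 a b b a) D = - (fval D a * fval D b).
Proof.
move=> ab; have ba : b != a by rewrite eq_sym.
rewrite /normal_diag /Xi4 /normal_word.
case ha: (halfpos a); case hb: (halfpos b); rewrite /= ?ha ?hb /=.
- rewrite (@diag_nestSP D (Psi a) (PsiS a) b) // diagSP /fval ha hb; ring.
- rewrite (@diag_nestPS D (Psi a) (PsiS a) b) // diagSP /fval ha hb; ring.
- rewrite (@diag_nestPS D (Psi b) (PsiS b) a) // diagSP /fval ha hb; ring.
- rewrite (@diag_nestPS D (PsiS b) (Psi b) a) // diagPS /fval ha hb; ring.
Qed.

Definition pnet (k : int) (o : op) : int :=
  match o with Psi k' => if k' == k then 1 else 0 | PsiS k' => if k' == k then -1 else 0 end.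
Definition net k (w : seq op) : int := \sum_(o <- w) pnet k o.

Lemma net_apply w D c D' : apply_word w D = Some (c, D') ->
  forall k, (memS D' k)%:R = (memS D k)%:R + net k w :> int.
Proof.
elim: w c D' => [|o w IH] c D' /=.
  by case=> _ <- k; rewrite /net big_nil addr0.
rewrite -/(apply_word w D).
case E: (apply_word w D) => [[c1 D1]|] //= H k.
have IH1 := IH _ _ E k.
rewrite /net big_cons -/(net k w).
case: o H => k' /=; case: ifP => hm // [_ <-]; rewrite memS_toggle /=;
case: (k =P k') => [e|nk] /=; try (subst k'; rewrite eqxx hm in IH1 * ).
- by rewrite /= in IH1 *; rewrite addrCA -IH1 addr0.
- have -> : (k' == k) = false by apply/eqP => e; apply: nk.
  by rewrite addbF IH1 add0r.
- by rewrite /= in IH1 *; rewrite addrCA -IH1 addNr.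
- have -> : (k' == k) = false by apply/eqP => e; apply: nk.
  by rewrite addbF IH1 add0r.
Qed.

Lemma net_normal k w : net k (normal_word w) = net k w.
Proof.
rewrite /net /normal_word big_cat !big_filter.
by rewrite [in RHS](bigID is_creation).
Qed.

Lemma part2 D a b c d : normal_diag (Xi4 a b c d) D != 0 ->
  ((a == b) && (c == d)) || ((a == d) && (b == c)).
Proof.
rewrite /normal_diag mulf_eq0 negb_or => /andP [_].
rewrite /diag_elem; case E: (apply_word _ D) => [[c0 D1]|]; last by rewrite eqxx.
case: (D1 =P D) => [eD|_]; last by rewrite eqxx.
move=> _; subst D1.
have H k : net k (Xi4 a b c d) = 0.
  rewrite -net_normal; have h := net_apply E k.
  by apply: (@addrI _ (memS D k)%:R); rewrite addr0 -h.
move: (H a) (H c); rewrite /net /Xi4 !big_cons !big_nil /pnet.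
by repeat case: ifP => /eqP ?; lia.
Qed.
Lemma geq_trans' : transitive (fun m n : nat => (n <= m)%N).
Proof. move=> a b c h1 h2; exact: leq_trans h2 h1. Qed.

Lemma galois0 (l : seq nat) : sorted geq l -> forall i j, (0 < i)%N ->
  (i <= nth 0%N l j)%N = (j < count (fun x => i <= x)%N l)%N.
Proof.
elim: l => [|x l IH] /= Hs i j Hi; first by rewrite nth_nil; lia.
have Hl := path_sorted Hs.
have Ha := order_path_min geq_trans' Hs.
have H0 : (x < i)%N -> count (fun y => i <= y)%N l = 0%N.
  move=> hx; apply/eqP; rewrite -leqn0 leqNgt -has_count; apply/hasPn => y yl.
  move/allP: Ha => /(_ y yl) /= hy; lia.
case: j => [|j] /=.
  case: (leqP i x) => hx /=; first by [].
  by rewrite H0.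
case: (leqP i x) => hx /=.
  by rewrite IH.
rewrite H0 // ltn0.
case: (ltnP j (size l)) => hj.
  move/allP: Ha => /(_ _ (mem_nth 0%N hj)) /= hy; lia.
by rewrite nth_default //; lia.
Qed.

Lemma galois l : is_partition l -> forall i j, (0 < i)%N -> (0 < j)%N ->
  (i <= part l j)%N = (j <= partT l i)%N.
Proof.
move=> Hl i j Hi Hj; rewrite /part /partT galois0 //.
by case: j Hj.
Qed.

Lemma part_big l j : (size l < j)%N -> part l j = 0%N.
Proof. move=> h; rewrite /part nth_default //; lia. Qed.

Lemma prefix_count (P : nat -> bool) :
  (forall i i', (0 < i')%N -> (i' <= i)%N -> P i -> P i') ->
  forall n, (count P (iota 1 n) <= n)%N /\
    (forall i, (0 < i)%N -> (i <= n)%N -> (i <= count P (iota 1 n))%N = P i).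
Proof.
move=> HP; elim=> [|n [IHb IHi]].
  split => // i; lia.
have -> : iota 1 n.+1 = iota 1 n ++ [:: n.+1].
  by rewrite -(addn1 n) iotaD /= add1n addn1.
rewrite count_cat /= addn0.
case Pn: (P n.+1) => /=.
  have cn : count P (iota 1 n) = n.
    case: n IHb IHi Pn => [|n] IHb IHi Pn; first by [].
    apply/eqP; rewrite eqn_leq IHb /= IHi //.
    exact: (HP n.+2).
  rewrite cn; split; first by lia.
  move=> i i0 hi; rewrite addn1 hi; symmetry; exact: (HP n.+1).
split; first by lia.
move=> i i0 hi; case: (ltnP i n.+1) => h.
  by rewrite addn0; apply: IHi.
have -> : i = n.+1 by lia.
rewrite Pn; apply/negbTE; lia.
Qed.

Lemma part_mono l : is_partition l -> forall j j', (0 < j)%N -> (j <= j')%N ->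
  (part l j' <= part l j)%N.
Proof.
move=> Hl j j' hj hjj. have hj0 : (0 < j')%N by lia.
case E: (part l j') => [|i] //.
rewrite (galois Hl) //.
apply: leq_trans hjj _.
rewrite -(galois Hl) //.
by rewrite E.
Qed.

Lemma durfeeP l : is_partition l -> forall i, (0 < i)%N ->
  (i <= durfee l)%N = (i <= part l i)%N.
Proof.
move=> Hl i Hi.
have HP : forall i i', (0 < i')%N -> (i' <= i)%N -> (i <= part l i)%N -> (i' <= part l i')%N.
  move=> a b hb hba ha; have hba0 := hba.
  apply: leq_trans hba _; apply: leq_trans ha _.
  exact: (part_mono Hl hb hba0).
have [Hb Hc] := prefix_count HP (size l).
case: (leqP i (size l)) => hi.
  by rewrite /durfee Hc.
rewrite part_big // leqn0.
have -> : (i <= durfee l)%N = false by apply/negbTE; rewrite /durfee; lia.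
by case: i Hi {hi}.
Qed.

Lemma memSlamP l n : memSlam l n <-> exists j, (0 < j)%N /\ (part l j)%:Z - j%:Z = n.
Proof.
split.
  case/orP => [/hasP [j jin /eqP e] | /andP [n0 hs]].
    by exists j; split => //; rewrite mem_iota in jin; lia.
  exists `|n|%N; split; first by lia.
  rewrite part_big; lia.
move=> [j [hj e]]; apply/orP.
case: (leqP j (size l)) => h.
  left; apply/hasP; exists j; first by rewrite mem_iota; lia.
  by apply/eqP.
right; rewrite part_big // in e; lia.
Qed.

Lemma divt (P : nat -> bool) m : P 0%N -> ~~ P m -> exists t, P t /\ ~~ P t.+1.
Proof.
elim: m => [|m IH] h0 hm; first by rewrite h0 in hm.
case Pm: (P m); first by exists m; rewrite Pm.
by apply: IH => //; rewrite Pm.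
Qed.

Lemma Clam_mem l : is_partition l -> forall a,
  (a \in Clam l) = if 0 <= a then memSlam l a else ~~ memSlam l a.
Proof.
move=> Hl a.
have Hd : forall i, (i \in iota 1 (durfee l)) -> (0 < i)%N /\ (i <= part l i)%N /\ (i <= partT l i)%N.
  move=> i; rewrite mem_iota => /andP [h1 h2].
  have h3 : (i <= part l i)%N by rewrite -durfeeP //; lia.
  by split => //; split => //; rewrite -galois.
rewrite /Clam; case: (lerP 0 a) => ha.
  apply/idP/idP.
    case/fsetUP => /imfsetP [i hi e] /=; subst a; have [h1 [h2 h3]] := Hd i hi.
      by apply/memSlamP; exists i.
    lia.
  move/memSlamP => [j [hj e]].
  have hj2 : (j <= part l j)%N by lia.
  apply/fsetUP; left; apply/imfsetP; exists j => //=.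
  by rewrite mem_iota; move: (durfeeP Hl hj); rewrite hj2; lia.
apply/idP/idP.
  case/fsetUP => /imfsetP [i hi e] /=; subst a; have [h1 [h2 h3]] := Hd i hi.
    lia.
  apply/negP => /memSlamP [j [hj e]].
  case: (leqP j (partT l i)) => hjp.
    have : (i <= part l j)%N by rewrite galois.
    lia.
  have : (i <= part l j)%N = false by rewrite galois //; apply/negbTE; lia.
  lia.
move=> hn.
have nS : forall j, (0 < j)%N -> (part l j)%:Z - j%:Z != a.
  move=> j hj; apply/negP => /eqP e; move/negP: hn; apply; apply/memSlamP; exists j; done.
set n := `|a|%N.
have hn1 : (0 < n)%N by rewrite /n; lia.
pose P t := a < (part l (n + t))%:Z - (n + t)%:Z.
have P0 : P 0%N.
  rewrite /P addn0; have := nS n hn1; lia.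
have Pm : ~~ P (size l).+1.
  rewrite /P part_big; last by lia.
  lia.
have [t [Pt Pt1]] := divt P0 Pm.
rewrite /P in Pt Pt1.
have hp : (n + t.+1 = (n + t).+1)%N by lia.
have ne := nS (n + t).+1 (ltn0Sn _).
rewrite hp in Pt1.
have Hp : partT l t.+1 = (n + t)%N.
  apply/eqP; rewrite eqn_leq; apply/andP; split.
    rewrite leqNgt; apply/negP => h.
    have : (t.+1 <= part l (n + t).+1)%N by rewrite galois.
    lia.
  rewrite -galois //; last by lia.
  lia.
apply/fsetUP; right; apply/imfsetP; exists t.+1 => /=.
  rewrite mem_iota; apply/andP; split => //.
  have : (t.+1 <= durfee l)%N by rewrite durfeeP // galois // Hp; lia.
  lia.
rewrite Hp; lia.
Qed.
Lemma nth_sumn (l : seq nat) j : (nth 0%N l j <= sumn l)%N.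
Proof. elim: l j => [|x l IH] [|j] //=; [exact: leq_addr | by apply: leq_trans (IH j) _; exact: leq_addl]. Qed.

Lemma memS_Slam l n : memS (Slam l) n = memSlam l n.
Proof.
rewrite /memS /Slam in_fset inE.
set s := [seq _ | _ <- _].
have -> : (n \in mem_fin (fin_finpred s)) = (n \in s) by [].
case: (boolP (n \in s)) => hs /=.
  by case: (memSlam l n); case: (n < 0).
have hw : n < - (size l)%:Z \/ (sumn l)%:Z < n.
  case: (ltrP n (- (size l)%:Z)) => h1; first by left.
  case: (ltrP (sumn l)%:Z n) => h2; first by right.
  exfalso; move/negP: hs; apply; apply/mapP; exists (absz (n + (size l)%:Z)).
    rewrite mem_iota; lia.
  lia.
case: hw => h.
  have -> : n < 0 by lia.
  by symmetry; apply/orP; right; apply/andP; split; lia.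
have -> : (n < 0) = false by lia.
symmetry; apply/negbTE/negP => /orP [/hasP [j jin /eqP e] | /andP [n0 _]]; last by lia.
have := nth_sumn l j.-1; rewrite mem_iota in jin; rewrite /part in e; lia.
Qed.

Lemma sum_pick (s : seq int) (F : int -> int) a : uniq s ->
  \sum_(x <- s) F x * (a == x)%:R = if a \in s then F a else 0.
Proof.
elim: s => [|x s IH] /=; first by rewrite big_nil.
move=> /andP [xs us]; rewrite big_cons IH // in_cons.
case: (a =P x) => [->|ne] /=.
  by rewrite (negbTE xs) mulr1 addr0.
by rewrite mulr0 add0r.
Qed.

Lemma fvalC l a : is_partition l ->
  fval (Slam l) a = \sum_(x <- Clam l) sgnF x * (a == x)%:R.
Proof.
move=> Hl; rewrite sum_pick ?fset_uniq // Clam_mem // /fval memS_Slam /sgnF /halfpos.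
by case: (0 <= a); case: (memSlam l a).
Qed.

Theorem proposition3 (l : seq nat) (Hl : is_partition l) (a b c d : int) :
  [/\ normal_diag (Xi2 a a) (Slam l)
        = \sum_(x <- Clam l) sgnF x * (a == x)%:R,
      normal_diag (Xi4 a b c d) (Slam l) != 0 ->
        ((a == b) && (c == d)) || ((a == d) && (b == c))
    & a != b ->
      normal_diag (Xi4 a b b a) (Slam l)
        = - \sum_(x <- Clam l) \sum_(x' <- Clam l)
              sgnF x * sgnF x' * (a == x)%:R * (b == x')%:R ].
Proof.
split.
- by rewrite part1 fvalC.
- exact: part2.
- move=> ab; rewrite part3 // !fvalC //.
  congr (- _); rewrite big_distrl; apply: eq_bigr => x _.
  rewrite big_distrr; apply: eq_bigr => x' _ /=; ring.
Qed.
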